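(* For integers $a,b\ge0$ let $c_{a,b}=c_{a,b}^{a+b+1}$. Then (1) $c_{a,b}\in\mathbb Z[\tfrac12]$; (2) $c_{a,b}-c_{b,a}\in2\mathbb Z$; (3) $\nu_2(c_{a+b,0})=\nu_2(c_{0,a+b})\le\nu_2(c_{a,b})\le0$.
   Context: For integers $a,b,r\ge0$, $c_{a,b}^r=2(-1)^r\Big(\binom{2r}{2b+2}-(1-2^{-2r})\binom{2r}{2a+1}\Big)$ (binomial coefficients $\binom nk=0$ if $k>n$). $\nu_2$ is the $2$-adic valuation on $\mathbb Q$, with $\nu_2(0)=\infty$. *)

(* Defs.v *)
From mathcomp Require Import all_boot all_order all_algebra.
Set Implicit Arguments. Unset Strict Implicit. Unset Printing Implicit Defensive.
Import Order.TTheory GRing.Theory Num.Theory.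
Local Open Scope ring_scope.

Definition cr (a b r : nat) : rat :=
  2 * (-1) ^+ r * ('C(2 * r, 2 * b + 2)%:R
                   - (1 - ((2 : rat) ^+ (2 * r))^-1) * 'C(2 * r, 2 * a + 1)%:R).

Definition c (a b : nat) : rat := cr a b (a + b + 1).

Definition in_Zhalf (q : rat) : Prop :=
  exists (z : int) (k : nat), q = z%:~R / (2 : rat) ^+ k.

Definition in_2Z (q : rat) : Prop := exists z : int, q = (2 * z)%:~R.

(* 2-adic valuation on Q; None stands for +infinity (value at 0) *)
Definition nu2 (q : rat) : option int :=
  if q == 0 then None
  else Some ((logn 2 `|numq q|)%:Z - (logn 2 `|denq q|)%:Z).

Definition le_ext (x y : option int) : bool :=
  match x, y with
  | _, None => true
  | None, Some _ => false
  | Some m, Some n => (m <= n)%R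
  end.

(* Main.v *)
Require Import Defs.
From mathcomp Require Import all_boot all_order all_algebra zify ring.
Import Order.TTheory GRing.Theory Num.Theory.
Local Open Scope ring_scope.

Lemma bin_lt_pow (n k : nat) : (0 < k)%N -> ('C(n, k) < 2 ^ n)%N.
Proof.
elim: n k => [|n IH] [|k] // _.


case: k => [|j].
- rewrite bin1 expnS. have := IH 1%N isT; rewrite bin1 => H. lia.
- rewrite binS expnS. have := IH j.+2 isT. have := IH j.+1 isT. lia.
Qed.

Lemma nu2_odd (o : int) (k : nat) : odd `|o| ->
  nu2 (o%:~R / (2 : rat) ^+ k) = Some (- (k%:Z)).
Proof.
move=> Ho.
have co : coprime `|o| `|(2 ^ k)%N%:Z|.
  by rewrite absz_nat coprime_sym coprimeXl // coprime_sym coprimen2.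
have E : (2 : rat) ^+ k = ((2 ^ k)%N%:Z)%:~R by rewrite -pmulrn natrX.
rewrite /nu2 E coprimeq_num // coprimeq_den //.
have o0 : o != 0 by apply/negP => /eqP o0; rewrite o0 in Ho.
have d0 : ((2 ^ k)%N%:Z) != 0 by rewrite eqz_nat expn_eq0.
rewrite (negbTE d0).
have -> : (o%:~R / ((2 ^ k)%N%:Z)%:~R == 0 :> rat) = false.
  by apply/negbTE; rewrite mulf_neq0 // ?invr_eq0 intr_eq0.
rewrite gtr0_sg ?mul1r; last by rewrite ltz_nat expn_gt0.

rewrite absz_nat pfactorK // logn_coprime; last by rewrite coprime_sym coprimen2.
by rewrite sub0r.
Qed.

Lemma c_repr (a b : nat) : exists o : int, odd `|o| /\
  c a b = o%:~R / (2 : rat) ^+ (2 * (a + b + 1) - 1 - logn 2 'C(2 * (a + b + 1), 2 * a + 1))%N.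
Proof.
set r := (a + b + 1)%N. set m := 'C(2 * r, 2 * a + 1). set v := logn 2 m.
set k := (2 * r - 1 - v)%N.
have m0 : (0 < m)%N by rewrite bin_gt0; lia.
have vle : (v <= 2 * r - 1)%N.
  have h1 : (2 ^ v <= m)%N by apply: dvdn_leq => //; apply: pfactor_dvdnn.
  have h2 : (m < 2 ^ (2 * r))%N by apply: bin_lt_pow; lia.
  have : (2 ^ v < 2 ^ (2 * r))%N by apply: leq_ltn_trans h1 h2.
  rewrite ltn_exp2l //; lia.
set w := (m %/ 2 ^ v)%N.
have mw : m = (w * 2 ^ v)%N by rewrite divnK // pfactor_dvdnn.
have wodd : odd w.
  apply/negPn/negP => we.
  have : (2 ^ v.+1 %| m)%N.
    by rewrite mw expnS dvdn_pmul2r ?expn_gt0 // dvdn2.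
  by rewrite pfactor_dvdn // ltnn.
exists ((-1) ^+ r * (2 * (2 ^+ k * ('C(2 * r, 2 * b + 2)%:Z - m%:Z)) + w%:Z)).
split.
  rewrite abszMsign.
  move: (2 ^+ k * _) => e.
  have H : (w %% 2 = 1)%N by rewrite modn2 wodd.
  have H2 : (`|(2 * e + w%:Z)%R| %% 2 = 1)%N by lia.
  by move: H2; rewrite modn2; case: odd.
rewrite /c /cr -/r -/m.
rewrite !(intrM, intrD, intrB, intrN) intr_sign rmorphXn /= -!pmulrn mw !natrM !natrX.
have -> : (2 * r = k.+1 + v)%N by lia.
rewrite exprD exprS.
field.
by rewrite !expf_neq0.
Qed.

Definition K (a b : nat) : nat :=
  (2 * (a + b + 1) - 1 - logn 2 'C(2 * (a + b + 1), 2 * a + 1))%N.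

Lemma nu2_c (a b : nat) : nu2 (c a b) = Some (- (K a b)%:Z).
Proof. by have [o [Ho ->]] := c_repr a b; rewrite nu2_odd. Qed.

Lemma logn_le (a b : nat) :
  (logn 2 'C(2 * (a + b + 1), 1) <= logn 2 'C(2 * (a + b + 1), 2 * a + 1))%N.
Proof.
set n := (2 * (a + b + 1))%N.
have n0 : (0 < n)%N by rewrite /n; lia.
rewrite bin1 -pfactor_dvdn //; last by rewrite bin_gt0 /n; lia.
have h : (n %| (2 * a + 1) * 'C(n, 2 * a + 1))%N.
  have := mul_bin_diag n (2 * a). rewrite addn1 => <-. exact: dvdn_mulr.
have : (2 ^ logn 2 n %| (2 * a + 1) * 'C(n, 2 * a + 1))%N.
  exact: dvdn_trans (pfactor_dvdnn 2 n) h.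
rewrite Gauss_dvdr //.
by rewrite coprimeXl // coprime_sym coprimen2 addn1 /= oddM.

Qed.

Lemma K_eq (a b : nat) : K (a + b) 0 = K 0 (a + b).
Proof.
rewrite /K !addn0 !add0n.
congr (_ - _ - logn 2 _)%N.
rewrite -(bin_sub (n := (2 * (a + b + 1))%N) (m := 1%N)); last lia.
congr 'C(_, _); lia.
Qed.

Lemma K_le (a b : nat) : (K a b <= K 0 (a + b))%N.
Proof.
rewrite /K add0n muln0.
rewrite add0n. have := logn_le a b. lia.
Qed.

Lemma diff2Z (a b : nat) : in_2Z (c a b - c b a).
Proof.
rewrite /c /cr [(b + a)%N]addnC.
set r := (a + b + 1)%N.
have -> : 'C(2 * r, 2 * b + 1) = 'C(2 * r, 2 * a + 1).
  rewrite -(bin_sub (n := (2 * r)%N) (m := (2 * a + 1)%N)); last by rewrite /r; lia.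
  congr 'C(_, _); rewrite /r; lia.
exists ((-1) ^+ r * ('C(2 * r, 2 * b + 2)%:Z - 'C(2 * r, 2 * a + 2)%:Z)).
rewrite !(intrM, intrD, intrB, intrN) intr_sign -!pmulrn.
ring.
Qed.

Theorem mainTheorem9 (a b : nat) :
  in_Zhalf (c a b) /\
  in_2Z (c a b - c b a) /\
  (nu2 (c (a + b) 0) = nu2 (c 0 (a + b)) /\
   le_ext (nu2 (c 0 (a + b))) (nu2 (c a b)) /\
   le_ext (nu2 (c a b)) (Some 0)).
Proof.
split.
  have [o [_ ->]] := c_repr a b. by exists o, (2 * (a + b + 1) - 1 - logn 2 'C(2 * (a + b + 1), 2 * a + 1))%N.
split; first exact: diff2Z.
rewrite !nu2_c K_eq /=.
split=> //.
have := K_le a b.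
split; lia.
Qed.
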